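(* Let $(E,\tau)$ be a locally solid vector lattice, where $\tau$ is a Fatou topology. Suppose that $C_\tau=E$ (which holds in particular when $E$ has the countable sup property, when $C_\tau$ has a countable order basis, or when $\tau$ is metrisable). Then every $\tau$-convergent net in $E$ has an embedded sequence that is uo-convergent to the same limit.
   Context: All vector lattices are real and Archimedean; linear topologies are Hausdorff. A locally solid topology on a vector lattice is a linear topology such that zero has a neighbourhood basis of solid sets. A net $(x_\alpha)$ order converges to $x$ if there is a net $y_\beta\downarrow0$ such that for each $\beta_0$ eventually $|x_\alpha-x|\leq y_{\beta_0}$; it uo-converges to $x$ if $|x_\alpha-x|\wedge|y|$ order converges to $0$ for every $y\in E$. A set is order closed if it contains the order limits of its nets. A Fatou topology is a locally solid topology in which zero has a neighbourhood basis of order closed solid sets. A sequence $(V_n)$ of neighbourhoods of zero is normal if $V_{n+1}+V_{n+1}\subseteq V_n$; the carrier $C_\tau$ is the union of the disjoint complements $N^{\mathrm d}$ where $N=\bigcap_nV_n$ ranges over intersections of normal sequences of solid $\tau$-neighbourhoods of zero. An order basis of a vector lattice $G$ is a non-empty $A\subseteq G$ with $A^{\mathrm d}=\{0\}$. $E$ has the countable sup property if every subset with a supremum contains an at most countable subset with the same supremum. Embedded sequence: given a net $(x_\alpha)_{\alpha\in A}$, a sequence $(x_{\alpha_n})_{n\geq1}$ with $\alpha_1\leq\alpha_2\leq\dotsb$, strictly increasing when $A$ has no largest element. *)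

(* Defs.v *)
From HB Require Import structures.
From mathcomp Require Import all_boot all_order all_algebra.
From mathcomp Require Import all_classical all_reals all_analysis.
Set Implicit Arguments. Unset Strict Implicit. Unset Printing Implicit Defensive.
Import Order.TTheory GRing.Theory Num.Theory.
Local Open Scope ring_scope.

Record dirset := DirSet {
  dcar :> Type;
  dle : dcar -> dcar -> Prop;
  dle_refl : forall a, dle a a;
  dle_trans : forall a b c, dle a b -> dle b c -> dle a c;
  dle_dir : forall a b, exists c, dle a c /\ dle b c;
  d_inh : inhabited dcar }.

Lemma nat_dir (a b : nat) : exists c, (a <= c)%N /\ (b <= c)%N.
Proof. by exists (maxn a b); rewrite leq_maxl leq_maxr. Qed.

Definition nat_dirset : dirset :=
  @DirSet nat (fun a b => (a <= b)%N) (fun a => leqnn a)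
    (fun a b c h1 h2 => leq_trans h1 h2) nat_dir (inhabits 0%N).

Record vector_lattice (R : realType) (E : lmodType R) := VectorLattice {
  vle : E -> E -> Prop;
  vle_refl : forall x, vle x x;
  vle_trans : forall x y z, vle x y -> vle y z -> vle x z;
  vle_anti : forall x y, vle x y -> vle y x -> x = y;
  vle_add : forall x y z, vle x y -> vle (x + z) (y + z);
  vle_scale : forall (a : R) x y, 0 <= a -> vle x y -> vle (a *: x) (a *: y);
  vjoin : E -> E -> E;
  vjoin_ubl : forall x y, vle x (vjoin x y);
  vjoin_ubr : forall x y, vle y (vjoin x y);
  vjoin_least : forall x y z, vle x z -> vle y z -> vle (vjoin x y) z;
  vmeet : E -> E -> E;
  vmeet_lbl : forall x y, vle (vmeet x y) x;
  vmeet_lbr : forall x y, vle (vmeet x y) y;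
  vmeet_greatest : forall x y z, vle z x -> vle z y -> vle z (vmeet x y);
  varchimedean : forall x y, vle 0 x -> (forall n : nat, vle (x *+ n) y) -> x = 0 }.

Section VL.
Variables (R : realType) (E : topologicalLmodType R) (L : vector_lattice E).

Definition vabs (x : E) : E := vjoin L x (- x).

Definition is_vinf (S : E -> Prop) (s : E) : Prop :=
  (forall y, S y -> vle L s y) /\
  (forall t, (forall y, S y -> vle L t y) -> vle L t s).

Definition decr_to0 (B : dirset) (y : B -> E) : Prop :=
  (forall b1 b2, dle b1 b2 -> vle L (y b2) (y b1)) /\
  is_vinf (fun z => exists b, z = y b) 0.

Definition order_conv (A : dirset) (x : A -> E) (l : E) : Prop :=
  exists (B : dirset) (y : B -> E), decr_to0 y /\
    forall b0, exists a0, forall a, dle a0 a -> vle L (vabs (x a - l)) (y b0).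

Definition uo_conv (A : dirset) (x : A -> E) (l : E) : Prop :=
  forall y : E, order_conv (fun a => vmeet L (vabs (x a - l)) (vabs y)) 0.

Definition tau_conv (A : dirset) (x : A -> E) (l : E) : Prop :=
  forall U : set E, nbhs l U -> exists a0, forall a, dle a0 a -> U (x a).

Definition solid (S : set E) : Prop :=
  forall x y, vle L (vabs x) (vabs y) -> S y -> S x.

Definition order_closed (S : set E) : Prop :=
  forall (A : dirset) (x : A -> E) (l : E),
    (forall a, S (x a)) -> order_conv x l -> S l.

Definition locally_solid : Prop :=
  forall U : set E, nbhs (0 : E) U ->
    exists V : set E, nbhs (0 : E) V /\ solid V /\ (forall z, V z -> U z).

Definition fatou_topology : Prop :=
  forall U : set E, nbhs (0 : E) U ->
    exists V : set E, nbhs (0 : E) V /\ solid V /\ order_closed V /\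
      (forall z, V z -> U z).

Definition normal_solid_seq (V : nat -> set E) : Prop :=
  (forall n, nbhs (0 : E) (V n) /\ solid (V n)) /\
  (forall n x y, V n.+1 x -> V n.+1 y -> V n (x + y)).

Definition disj_compl (N : set E) : set E :=
  fun x => forall y, N y -> vmeet L (vabs x) (vabs y) = 0.

Definition carrier_tau : set E :=
  fun x => exists V : nat -> set E, normal_solid_seq V /\
    disj_compl (fun z => forall n, V n z) x.

End VL.

Definition embedded_seq (A : dirset) (s : nat -> A) : Prop :=
  (forall n, dle (s n) (s n.+1)) /\
  ((~ exists m : A, forall a : A, dle a m) ->
     forall n, dle (s n) (s n.+1) /\ ~ dle (s n.+1) (s n)).

(* Main.v *)
Require Import Defs.
From HB Require Import structures.
From mathcomp Require Import all_boot all_order all_algebra.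
From mathcomp Require Import all_classical all_reals all_analysis.
From Stdlib Require Import ClassicalEpsilon Classical.
Set Implicit Arguments. Unset Strict Implicit. Unset Printing Implicit Defensive.
Import Order.TTheory GRing.Theory Num.Theory.
Local Open Scope ring_scope.
Section Alg.
Variables (R : realType) (E : topologicalLmodType R) (L : vector_lattice E).
Local Notation le := (vle L).
Local Notation mt := (vmeet L).
Local Notation jn := (vjoin L).
Local Notation ab := (vabs L).

Lemma leR x : le x x. Proof. exact: vle_refl. Qed.
Lemma leT {x y z} : le x y -> le y z -> le x z. Proof. exact: vle_trans. Qed.
Lemma leA x y : le x y -> le y x -> x = y. Proof. exact: vle_anti. Qed.
Lemma leDr c x y : le x y -> le (x + c) (y + c). Proof. exact: vle_add. Qed.
Lemma leDl c x y : le x y -> le (c + x) (c + y).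
Proof. by rewrite ![c + _]addrC; apply: leDr. Qed.
Lemma leD a b c d : le a b -> le c d -> le (a + c) (b + d).
Proof. by move=> h1 h2; apply: (leT (leDr c h1)); apply: leDl. Qed.
Lemma leDK c x y : le (x + c) (y + c) -> le x y.
Proof. by move=> /(leDr (- c)); rewrite !addrK. Qed.
Lemma leN x y : le x y -> le (- y) (- x).
Proof.
move=> /(leDr (- x - y)).
by rewrite addrA subrr add0r addrCA subrr addr0.
Qed.
Lemma leNK x y : le (- y) (- x) -> le x y.
Proof. by move=> /leN; rewrite !opprK. Qed.
Lemma le_sub0 x y : le x y -> le 0 (y - x).
Proof. by move=> /(leDr (- x)); rewrite subrr. Qed.
Lemma le_0sub x y : le 0 (y - x) -> le x y.
Proof. by move=> /(leDr x); rewrite add0r subrK. Qed.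
Lemma le_subr x y z : le (x + z) y -> le x (y - z).
Proof. by move=> /(leDr (- z)); rewrite addrK. Qed.
Lemma le_subl x y z : le x (y + z) -> le (x - z) y.
Proof. by move=> /(leDr (- z)); rewrite addrK. Qed.
Lemma le_addsub x y z : le x (y - z) -> le (x + z) y.
Proof. by move=> /(leDr z); rewrite subrK. Qed.

Lemma le_mv x y z : le (x - z) y -> le x (y + z).
Proof. by move=> /(leDr z); rewrite subrK. Qed.

Lemma mtl x y : le (mt x y) x. Proof. exact: vmeet_lbl. Qed.
Lemma mtr x y : le (mt x y) y. Proof. exact: vmeet_lbr. Qed.
Lemma mtg x y z : le z x -> le z y -> le z (mt x y). Proof. exact: vmeet_greatest. Qed.
Lemma jnl x y : le x (jn x y). Proof. exact: vjoin_ubl. Qed.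
Lemma jnr x y : le y (jn x y). Proof. exact: vjoin_ubr. Qed.
Lemma jnL x y z : le x z -> le y z -> le (jn x y) z. Proof. exact: vjoin_least. Qed.

Lemma mtC x y : mt x y = mt y x.
Proof. by apply: leA; apply: mtg; [apply: mtr|apply: mtl|apply: mtr|apply: mtl]. Qed.
Lemma mt_le x x' y y' : le x x' -> le y y' -> le (mt x y) (mt x' y').
Proof. by move=> h1 h2; apply: mtg; [apply: leT h1; apply: mtl|apply: leT h2; apply: mtr]. Qed.
Lemma jn_le x x' y y' : le x x' -> le y y' -> le (jn x y) (jn x' y').
Proof. by move=> h1 h2; apply: jnL; [apply: leT (jnl _ _)|apply: leT (jnr _ _)]. Qed.
Lemma mt_id x : mt x x = x.
Proof. by apply: leA; [apply: mtl|apply: mtg; apply: leR]. Qed.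

Lemma mtD x y c : mt (x + c) (y + c) = mt x y + c.
Proof.
apply: leA; last by apply: mtg; apply: leDr; [apply: mtl|apply: mtr].
apply: le_mv; apply: mtg; apply: le_subl; [apply: mtl|apply: mtr].
Qed.
Lemma jnD x y c : jn (x + c) (y + c) = jn x y + c.
Proof.
apply: leA; first by apply: jnL; apply: leDr; [apply: jnl|apply: jnr].
apply: le_addsub; apply: jnL; apply: le_subr; [apply: jnl|apply: jnr].
Qed.

Lemma jnC x y : jn x y = jn y x.
Proof. by apply: leA; apply: jnL; [apply: jnr|apply: jnl|apply: jnr|apply: jnl]. Qed.
Lemma jnN x y : - jn x y = mt (- x) (- y).
Proof.
apply: leA; first by apply: mtg; apply: leN; [apply: jnl|apply: jnr].
apply: leNK; rewrite opprK; apply: jnL; apply: leNK; rewrite opprK;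
  [apply: mtl|apply: mtr].
Qed.
Lemma mt_jn x y : mt x y + jn x y = x + y.
Proof.
have h1 : mt x y = - jn (- x) (- y) by rewrite jnN !opprK.
have h2 : jn x y = jn (- x) (- y) + (x + y).
  by rewrite -jnD addrA addNr add0r addrCA addNr addr0 jnC.
by rewrite h1 h2 addrA addNr add0r.
Qed.
Lemma disj_add x y : mt x y = 0 -> x + y = jn x y.
Proof. by move=> h; rewrite -mt_jn h add0r. Qed.

Lemma abs_ge0 x : le 0 (ab x).
Proof.
have h : le 0 (ab x + ab x).
  by rewrite -(subrr x); apply: leD; [apply: jnl|apply: jnr].
have h2 : (0 : R) <= 2%:R^-1 by rewrite invr_ge0 ler0n.
move: (vle_scale h2 h); rewrite scaler0.
have -> : ab x + ab x = (2%:R : R) *: ab x by rewrite scaler_nat mulr2n.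
by rewrite scalerA mulVf ?pnatr_eq0 // scale1r.
Qed.
Lemma abs_id a : le 0 a -> ab a = a.
Proof.
move=> h; apply: leA; last exact: jnl.
apply: jnL; first exact: leR.
by apply: (leT _ h); rewrite -oppr0; apply: leN.
Qed.
Lemma abs_neg a : le a 0 -> ab a = - a.
Proof.
move=> h; apply: leA; last exact: jnr.
apply: jnL; last exact: leR.
by apply: (leT h); rewrite -oppr0; apply: leN.
Qed.
Lemma abs_abs x : ab (ab x) = ab x.
Proof. exact/abs_id/abs_ge0. Qed.
Lemma mt_ge0 x y : le 0 x -> le 0 y -> le 0 (mt x y).
Proof. exact: mtg. Qed.
Lemma diff_disj x y : mt (x - mt x y) (y - mt x y) = 0.
Proof. by rewrite mtD subrr. Qed.

Lemma core1 b w z : mt b w = 0 -> le b z -> le w z -> le (b + w) z.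
Proof. by move=> h hb hw; rewrite disj_add //; apply: jnL. Qed.

Lemma core2 b q v z : le 0 v -> le v (q - mt q b) -> le b z -> le q z ->
  le (b + v) z.
Proof.
move=> v0 hv hb hq.
set r := b - mt b q.
have r0 : le 0 r by apply: le_sub0; apply: mtl.
have hvr : mt r v = 0.
  rewrite mtC; apply: leA; last exact: mt_ge0.
  rewrite -(diff_disj q b) /r [mt b q]mtC.
  by apply: mt_le => //; apply: leR.
have -> : b + v = mt b q + (r + v) by rewrite /r addrA addrCA subrr addr0.
rewrite (disj_add hvr) addrC -jnD.
rewrite /r subrK; apply: jnL => //.
apply: leT hq; rewrite mtC; exact: le_addsub.
Qed.


Definition Dset (b : nat -> E) (z : E) := exists k, forall j, (k <= j)%N -> le (b j) z.

Lemma iter_arch (b : nat -> E) u p v : (forall j, le (b j) u) ->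
  (forall z, Dset b z -> le p z) -> le 0 p -> le 0 v ->
  (exists k, forall j z, (k <= j)%N -> le (b j) z -> le p z -> le (b j + v) z) ->
  v = 0.
Proof.
move=> bu hp p0 v0 [k hk].
have HD : forall N, Dset b (u - v *+ N).
  elim=> [|N [k1 IH]]; first by exists 0%N => j _; rewrite mulr0n subr0.
  exists (maxn k k1) => j; rewrite geq_max => /andP[h1 h2].
  have := hk j _ h1 (IH j h2) (hp _ (ex_intro _ k1 IH)).
  by move=> /le_subr; rewrite mulrSr opprD addrA.
apply: (@varchimedean _ _ L v u v0) => n.
apply: le_0sub; apply: leT p0 _; exact: hp.
Qed.

Lemma Dset_mt b z1 z2 : Dset b z1 -> Dset b z2 -> Dset b (mt z1 z2).
Proof.
move=> [k1 h1] [k2 h2]; exists (maxn k1 k2) => j; rewrite geq_max => /andP[j1 j2].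
by apply: mtg; [apply: h1|apply: h2].
Qed.

Definition Dt (b : nat -> E) := {z : E | Dset b z}.
Lemma Dt_dir b (a1 a2 : Dt b) :
  exists c : Dt b, le (proj1_sig c) (proj1_sig a1) /\ le (proj1_sig c) (proj1_sig a2).
Proof.
case: a1 a2 => [z1 h1] [z2 h2].
by exists (exist _ _ (Dset_mt h1 h2)); split; [apply: mtl|apply: mtr].
Qed.
Definition Ddir b (i : Dt b) : dirset :=
  @DirSet (Dt b) (fun z1 z2 => le (proj1_sig z2) (proj1_sig z1))
    (fun a => leR _) (fun a b c h1 h2 => leT h2 h1) (@Dt_dir b) (inhabits i).

Lemma oc_D (b : nat -> E) u : (forall j, le 0 (b j)) -> (forall j, le (b j) u) ->
  (forall t, (forall z, Dset b z -> le t z) -> le t 0) ->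
  order_conv L (A := nat_dirset) b 0.
Proof.
move=> b0 bu H.
have Du : Dset b u by exists 0%N.
exists (Ddir (exist _ u Du)), (fun z => proj1_sig z); split.
  split => //; split.
    move=> y [[z [k hk]] ->] /=; apply: leT (hk k (leqnn k)); exact: b0.
  move=> t ht; apply: H => z hz; exact: (ht z (ex_intro _ (exist _ z hz) erefl)).
move=> [z [k hk]]; exists k => a /= ha; rewrite subr0 abs_id //; exact: hk.
Qed.

Fixpoint psum (f : nat -> E) (k n : nat) : E :=
  match n with 0 => f k | n'.+1 => f k + psum f k.+1 n' end.

Lemma psum_ge0 f k n : (forall j, le 0 (f j)) -> le 0 (psum f k n).
Proof.
move=> h; elim: n k => [|n IH] k /=; first exact: h.
by rewrite -(addr0 0); apply: leD.
Qed.
Lemma psum_ge f k d : (forall j, le 0 (f j)) -> le (f (k + d)%N) (psum f k d).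
Proof.
move=> h; elim: d k => [|d IH] k /=; first by rewrite addn0; apply: leR.
by rewrite -(add0r (f _)) addnS -addSn; apply: leD.
Qed.
Lemma psum_step f k n : (forall j, le 0 (f j)) -> le (psum f k n) (psum f k n.+1).
Proof.
move=> h; elim: n k => [|n IH] k /=.
  by rewrite -{1}(addr0 (f k)); apply: leDl.
by apply: leDl; apply: IH.
Qed.
Lemma psum_mono f k n1 n2 : (forall j, le 0 (f j)) -> (n1 <= n2)%N ->
  le (psum f k n1) (psum f k n2).
Proof.
move=> h /subnK <-; elim: (n2 - n1)%N => [|d IH]; first by rewrite add0n; apply: leR.
by apply: leT IH _; rewrite addSn; apply: psum_step.
Qed.


Definition FN (T : nat -> set E) : Prop :=
  (forall n, nbhs (0:E) (T n) /\ solid L (T n) /\ order_closed L (T n)) /\ (forall n x y, T n.+1 x -> T n.+1 y -> T n (x + y)).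

Lemma FN_sub T : FN T -> forall n z, T n.+1 z -> T n z.
Proof.
move=> [h1 h2] n z hz; rewrite -(addr0 z); apply: h2 => //.
by case: (h1 n.+1) => /nbhs_singleton.
Qed.
Lemma FN_mono T m k : FN T -> (m <= k)%N -> forall z, T k z -> T m z.
Proof.
move=> hT /subnK <-; elim: (k - m)%N => [|d IH] z; first by rewrite add0n.
by rewrite addSn => /(FN_sub hT); apply: IH.
Qed.
Lemma psum_in T f k n : FN T -> (forall j, (k <= j)%N -> T j.+1 (f j)) ->
  T k (psum f k n).
Proof.
move=> hT; elim: n k => [|n IH] k hf /=; first by apply: FN_sub hT _ _ (hf k (leqnn k)).
apply: hT.2; first exact: hf.
by apply: IH => j hj; apply: hf; apply: ltnW.
Qed.

Lemma fatou_zero T e (a b : nat -> E) u i q : FN T ->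
  disj_compl L (fun z => forall n, T n z) e -> a i = ab e ->
  (forall j, (i < j)%N -> T j.+1 (a j)) -> (forall j, le 0 (a j)) ->
  (forall j, le 0 (b j)) -> (forall j, le (b j) (a j)) -> (forall j, le (b j) u) ->
  le 0 q -> le q (a i) -> (forall z, Dset b z -> le q z) -> q = 0.
Proof.
move=> hT Hd ha hTa a0 b0 ba bu q0 qa qP.
have Tq : forall m, T m q.
  move=> m; set k := (i.+1 + m)%N.
  have hk : forall n, T m (psum a k n).
    move=> n; apply: (FN_mono hT (leq_addl _ _)); apply: psum_in => // j hj.
    by apply: hTa; apply: leq_trans hj; apply: leq_addr.
  have hq : forall n, T m (mt q (psum a k n)).
    move=> n; have [_ [hs _]] := hT.1 m; apply: hs (hk n).
    by rewrite !abs_id //; [apply: mtr|apply: psum_ge0|apply: mt_ge0 => //; apply: psum_ge0].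
  have [_ [_ hoc]] := hT.1 m.
  apply: (hoc nat_dirset (fun n => mt q (psum a k n)) q hq).
  exists nat_dirset, (fun n => q - mt q (psum a k n)); split.
    split.
      move=> n1 n2 h; apply: leDl; apply: leN; apply: mt_le; first exact: leR.
      exact: psum_mono.
    split; first by move=> y [n ->]; apply: le_sub0; apply: mtl.
    move=> t ht; set v := jn t 0.
    have v0 : le 0 v by apply: jnr.
    have hv : forall n, le v (q - mt q (psum a k n)).
      by move=> n; apply: jnL; [apply: ht; exists n|apply: le_sub0; apply: mtl].
    have -> : 0 = v.
      symmetry; apply: (iter_arch (b:=b) (u:=u) (p:=q)) => //.
      exists k => j z hj hbz hqz; apply: core2 v0 _ hbz hqz.
      apply: leT (hv (j - k)%N) _; apply: leDl; apply: leN; apply: mt_le; first exact: leR.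
      apply: leT (ba j) _; have := psum_ge k (j - k) a0; by rewrite subnKC.
    exact: jnl.
  move=> n0; exists n0 => n hn /=.
  rewrite abs_neg; last by apply: le_subl; rewrite add0r; apply: mtl.
  rewrite opprB; apply: leDl; apply: leN; apply: mt_le; first exact: leR.
  exact: psum_mono.
have := Hd q Tq; rewrite (abs_id q0) -ha => h.
apply: leA => //; rewrite -h; apply: mtg => //; exact: leR.
Qed.

Lemma nb_add (W : set E) : nbhs 0 W -> exists U : set E, nbhs 0 U /\ forall x y, U x -> U y -> W (x + y).
Proof.
move=> W0.
have /= := @add_continuous E (0, 0) W; rewrite addr0 => /(_ W0).
move=> [B] [B1 B2] BU; exists (fun z => B.1 z /\ B.2 z); split.
  exact: filterI.
by move=> x y [Hx _] [_ Hy]; apply: (BU (x, y)).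
Qed.
Lemma nb_tr (H : set E) (l : E) : nbhs 0 H -> nbhs l (fun y => H (y - l)).
Proof.
move=> H0; have := nbhsT_subproof (@add_continuous E) l H0.
apply: filterS => y [z Hz <-]; by rewrite addrC addKr.
Qed.

Lemma upgrade (hf : fatou_topology L) e : carrier_tau L e ->
  exists T, FN T /\ disj_compl L (fun z => forall n, T n z) e.
Proof.
case=> V [[hV1 hV2] hdV].
pose Fz (W : set E) := epsilon (inhabits setT) (fun V' : set E => nbhs 0 V' /\
  solid L V' /\ order_closed L V' /\ (forall z, V' z -> W z)).
pose Ua (W : set E) := epsilon (inhabits setT) (fun U : set E => nbhs 0 U /\
  forall x y, U x -> U y -> W (x + y)).
have hFz : forall W, nbhs 0 W -> nbhs 0 (Fz W) /\
  solid L (Fz W) /\ order_closed L (Fz W) /\ (forall z, Fz W z -> W z).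
  by move=> W hW; exact: (epsilon_spec (inhabits setT) _ (hf W hW)).
have hUa : forall W, nbhs 0 W -> nbhs 0 (Ua W) /\
  forall x y, Ua W x -> Ua W y -> W (x + y).
  by move=> W hW; exact: (epsilon_spec (inhabits setT) _ (nb_add hW)).
pose T := fix T n := match n with 0 => Fz (V 0) | n'.+1 =>
  Fz (fun z => V n'.+1 z /\ Ua (T n') z) end.
have hT : forall n, nbhs 0 (T n) /\ solid L (T n) /\ order_closed L (T n) /\
  (forall z, T n z -> V n z) /\
  (forall z, T n.+1 z -> Ua (T n) z).
  elim=> [|n IH].
    have hW : nbhs 0 (fun z => V 1 z /\ Ua (T 0) z).
      by apply: filterI; [apply: (hV1 1).1|apply: (hUa _ (hFz _ (hV1 0).1).1).1].
    have [h1 [h2 [h3 h4]]] := hFz _ (hV1 0).1.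
    have [_ [_ [_ h5]]] := hFz _ hW.
    by split; [|split; [|split; [|split]]] => // z /h5 [].
  have hW : nbhs 0 (fun z => V n.+1 z /\ Ua (T n) z).
    by apply: filterI; [apply: (hV1 n.+1).1|apply: (hUa _ IH.1).1].
  have [h1 [h2 [h3 h4]]] := hFz _ hW.
  have hW2 : nbhs 0 (fun z => V n.+2 z /\ Ua (T n.+1) z).
    by apply: filterI; [apply: (hV1 n.+2).1|apply: (hUa _ h1).1].
  have [_ [_ [_ h5]]] := hFz _ hW2.
  by split; [|split; [|split; [|split]]] => // z; [move/h4 => []|move/h5 => []].
exists T; split.
  split; first by move=> n; have [? [? [? _]]] := hT n.
  move=> n x y hx hy; have [h1 [_ [_ [_ h5]]]] := hT n.
  by apply: (hUa _ h1).2; apply: h5.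
move=> y hy; apply: hdV => n; have [_ [_ [_ [h _]]]] := hT n; exact/h/hy.
Qed.

End Alg.

Theorem theorem5p4 (R : realType) (E : topologicalLmodType R)
    (L : vector_lattice E) :
  hausdorff_space E ->
  locally_solid L ->
  fatou_topology L ->
  (forall x : E, carrier_tau L x) ->
  forall (A : dirset) (x : A -> E) (l : E),
    tau_conv x l ->
    exists s : nat -> A, embedded_seq s /\
      uo_conv L (A := nat_dirset) (fun n => x (s n)) l.
Proof.
move=> _ _ hf hc A x l hx.
have Tc : forall e : E, {T | FN L T /\ disj_compl L (fun z => forall n, T n z) e}.
  by move=> e; exact: (cid (upgrade hf (hc e))).
pose Tf e := proj1_sig (Tc e).
have hTf : forall e, FN L (Tf e) /\ disj_compl L (fun z => forall n, Tf e n z) e.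
  by move=> e; exact: (proj2_sig (Tc e)).
case: (d_inh A) => a0.
pose e a := x a - l.
pose G (lst : seq A) n : set E := fun z => forall a', List.In a' lst -> Tf (e a') n z.
have hG : forall lst n, nbhs 0 (G lst n).
  elim=> [|a' lst IH] n.
    by apply: filterS filterT => z _ a'' [].
  apply: filterS (filterI ((hTf (e a')).1.1 n).1 (IH n)) => z [h1 h2] a'' [<-|] //.
  exact: h2.
pose stepP j lst a' := dle (head a0 lst) a' /\
  ((exists b, ~ dle b (head a0 lst)) -> ~ dle a' (head a0 lst)) /\ G lst j.+2 (e a').
pose step j lst := epsilon (inhabits a0) (stepP j lst).
have hstep : forall j lst, stepP j lst (step j lst).
  move=> j lst; apply: epsilon_spec.
  have [a1 ha1] := hx _ (nb_tr l (hG lst j.+2)).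
  set c := head a0 lst.
  case: (classic (exists b, ~ dle b c)) => [[b hb]|hn].
    have [d1 [hd1 hd2]] := dle_dir c a1; have [d [hd3 hd4]] := dle_dir d1 b.
    exists d; split; first by apply: dle_trans hd1 hd3.
    split; first by move=> _ hdc; apply: hb; apply: dle_trans hd4 hdc.
    by apply: ha1; apply: dle_trans hd2 hd3.
  have [d [hd1 hd2]] := dle_dir c a1; exists d; split => //; split.
    by move=> h; exfalso; exact: hn h.
  exact: ha1.
pose build := fix build j := match j with 0 => [:: a0]
  | j'.+1 => step j' (build j') :: build j' end.
pose s j := head a0 (build j).
have hin : forall i j, (i <= j)%N -> List.In (s i) (build j).
  move=> i j /subnK <-; elim: (j - i)%N => [|d IH].
    by rewrite add0n; case: i => [|i] /=; left.
  by rewrite addSn /=; right; exact: IH.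
have hsT : forall i j, (i < j)%N -> Tf (e (s i)) j.+1 (e (s j)).
  move=> i [|j] // hij; have [_ [_ h]] := hstep j (build j).
  by apply: h; apply: hin.
exists s; split.
  split; first by move=> n; exact: (hstep n (build n)).1.
  move=> hnm n; split; first exact: (hstep n (build n)).1.
  apply: (hstep n (build n)).2.1.
  apply: NNPP => hne; apply: hnm; exists (s n) => a; apply: NNPP => ha.
  by apply: hne; exists a.
move=> y; set u := vabs L y.
pose a j := vabs L (e (s j)).
pose b j := vmeet L (a j) u.
apply: (@oc_D _ _ L b u).
- by move=> j; apply: mt_ge0; apply: abs_ge0.
- by move=> j; apply: mtr.
move=> t ht; set w := vjoin L t 0.
have w0 : vle L 0 w by apply: jnr.
have wP : forall z, Dset L b z -> vle L w z.
  move=> z hz; apply: jnL; first exact: ht.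
  case: hz => k hk; apply: leT (hk k (leqnn k)); apply: mt_ge0; apply: abs_ge0.
have hq : forall i, vmeet L w (a i) = 0.
  move=> i; have [hF hD] := hTf (e (s i)).
  apply: (fatou_zero (b:=b) (u:=u) hF hD (erefl (a i))).
  - move=> j hij; have [_ [hs _]] := hF.1 j.+1; apply: hs (hsT i j hij).
    by rewrite /a abs_abs; exact: leR.
  - by move=> j; apply: abs_ge0.
  - by move=> j; apply: mt_ge0; apply: abs_ge0.
  - by move=> j; apply: mtl.
  - by move=> j; apply: mtr.
  - by apply: mt_ge0 => //; apply: abs_ge0.
  - by apply: mtr.
  - by move=> z hz; exact: (leT (@mtl _ _ L w (a i)) (wP z hz)).
have w00 : w = 0.
  apply: (@iter_arch _ _ L b u w w) => //; first by move=> j; apply: mtr.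
  exists 0%N => j z _ hbz hwz; apply: core1 => //.
  apply: leA; last by apply: mt_ge0 => //; apply: mt_ge0; apply: abs_ge0.
  rewrite -(hq j) [vmeet L w (a j)]mtC; apply: mt_le; [apply: mtl|apply: leR].
by apply: (leT (@jnl _ _ L t 0)); rewrite -/w w00; exact: leR.
Qed.
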